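(* Let $\mu\in[0,1/2]$, $d=\sqrt{1-3\mu+3\mu^2}$, $\lambda_1=\tfrac32(1-d)$, $\lambda_2=\tfrac32(1+d)$, and consider the planar system $\ddot x-2\dot y=\Omega_x$, $\ddot y+2\dot x=\Omega_y$ with $\Omega(x,y)=\tfrac12(\lambda_2x^2+\lambda_1y^2)+\frac{1}{\sqrt{x^2+y^2}}$, and its equilibrium points $L_{1,2}=(\pm\lambda_2^{-1/3},0)$. Linearizing at $L_1$ or $L_2$, with matrix $A=\begin{pmatrix}0&0&1&0\\0&0&0&1\\ \Omega_{xx}&\Omega_{xy}&0&2\\ \Omega_{xy}&\Omega_{yy}&-2&0\end{pmatrix}$ (second derivatives evaluated at the point), whose characteristic polynomial is $\lambda^4+\mathcal A\lambda^2+B$ with $\mathcal A=4-\Omega_{xx}-\Omega_{yy}$ and $B=\Omega_{xx}\Omega_{yy}-\Omega_{xy}^2$, one has $B<0$ for all $\mu\in[0,1/2]$. Consequently $L_1$ and $L_2$ are unstable for this range of $\mu$; in fact the eigenvalues of $A$ are $\pm\Lambda$ and $\pm i\omega$ with $\Lambda>0$, $\omega>0$.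
   Context: This is the planar Hill approximation of the restricted four-body problem (in rotated coordinates) near a small mass at a vertex of an equilateral triangle with masses $1-\mu$ and $\mu$. *)

(* Defs.v *)
From HB Require Import structures.
From mathcomp Require Import all_boot all_order all_algebra.
From mathcomp Require Import all_classical all_reals all_analysis.
From mathcomp Require Import complex.
Set Implicit Arguments. Unset Strict Implicit. Unset Printing Implicit Defensive.
Import Order.TTheory GRing.Theory Num.Theory.
Local Open Scope ring_scope.

Section Hill.
Variable R : realType.
Variable mu : R.

Definition dd : R := Num.sqrt (1 - 3 * mu + 3 * mu ^+ 2).
Definition lam1 : R := 3 / 2 * (1 - dd).
Definition lam2 : R := 3 / 2 * (1 + dd).

Definition Omega (x y : R) : R :=
  2^-1 * (lam2 * x ^+ 2 + lam1 * y ^+ 2) + (Num.sqrt (x ^+ 2 + y ^+ 2))^-1.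

Definition Omega_xx (x y : R) : R :=
  derive1 (fun s => derive1 (fun t => Omega t y) s) x.
Definition Omega_yy (x y : R) : R :=
  derive1 (fun s => derive1 (fun t => Omega x t) s) y.
Definition Omega_xy (x y : R) : R :=
  derive1 (fun s => derive1 (fun t => Omega t s) x) y.

Definition L1 : R * R := (lam2 `^ (- 3^-1), 0).
Definition L2 : R * R := (- lam2 `^ (- 3^-1), 0).

Definition mx4 (l : seq (seq R)) : 'M[R]_4 :=
  \matrix_(i < 4, j < 4) nth 0 (nth [::] l i) j.

Definition linA (p : R * R) : 'M[R]_4 :=
  let: (x, y) := p in
  mx4 [:: [:: 0; 0; 1; 0];
          [:: 0; 0; 0; 1];
          [:: Omega_xx x y; Omega_xy x y; 0; 2];
          [:: Omega_xy x y; Omega_yy x y; -2; 0]].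

Definition hillA (p : R * R) : R := 4 - Omega_xx p.1 p.2 - Omega_yy p.1 p.2.
Definition hillB (p : R * R) : R :=
  Omega_xx p.1 p.2 * Omega_yy p.1 p.2 - Omega_xy p.1 p.2 ^+ 2.

End Hill.

Definition cplx_mx (R : realType) (n : nat) (M : 'M[R]_n) : 'M[complex.complex R]_n :=
  map_mx (fun a => complex.Complex a 0) M.

(* Main.v *)
Require Import Defs.
From HB Require Import structures.
From mathcomp Require Import all_boot all_order all_algebra.
From mathcomp Require Import all_classical all_reals all_analysis.
From mathcomp Require Import complex.
From mathcomp Require Import ring lra.
Import Order.TTheory GRing.Theory Num.Theory.
Local Open Scope ring_scope.

Definition L4 {T : nzRingType} (l : seq (seq T)) : 'M[T]_4 :=
  \matrix_(i < 4, j < 4) nth 0 (nth [::] l i) j.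

Lemma det_L4 (T : comNzRingType) (a b c d e f g h i j k l m n o p : T) :
  \det (L4 [:: [:: a; b; c; d]; [:: e; f; g; h]; [:: i; j; k; l]; [:: m; n; o; p]])
  = a * (f * (k * p - l * o) - g * (j * p - l * n) + h * (j * o - k * n))
  - b * (e * (k * p - l * o) - g * (i * p - l * m) + h * (i * o - k * m))
  + c * (e * (j * p - l * n) - f * (i * p - l * m) + h * (i * n - j * m))
  - d * (e * (j * o - k * n) - f * (i * o - k * m) + g * (i * n - j * m)).
Proof.
rewrite (expand_det_row _ ord0) !big_ord_recl big_ord0 /cofactor.
rewrite !(expand_det_row _ ord0) !big_ord_recl !big_ord0 /cofactor.
rewrite !(expand_det_row _ ord0) !big_ord_recl !big_ord0 /cofactor.
rewrite !det_mx11 !mxE /=.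
rewrite /bump /=.
ring.
Qed.

Lemma cp4 (T : comNzRingType) (a b c : T) :
  char_poly (L4 [:: [:: 0; 0; 1; 0];
          [:: 0; 0; 0; 1];
          [:: a; b; 0; 2];
          [:: b; c; -2; 0]]) = 'X^4 + (4 - a - c)%:P * 'X^2 + (a * c - b ^+ 2)%:P.
Proof.
rewrite /char_poly.
have -> : char_poly_mx (L4 [:: [:: 0; 0; 1; 0]; [:: 0; 0; 0; 1]; [:: a; b; 0; 2]; [:: b; c; -2; 0]])
  = L4 [:: [:: 'X; 0; -1; 0]; [:: 0; 'X; 0; -1]; [:: - a%:P; - b%:P; 'X; - 2%:P];
           [:: - b%:P; - c%:P; 2%:P; 'X]].
  apply/matrixP => i j; rewrite !mxE.
  case: i => [[|[|[|[|?]]]] ?] //; case: j => [[|[|[|[|?]]]] ?] //=;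
    rewrite ?mulr1n ?mulr0n ?subr0 ?sub0r ?polyC0 ?polyC1 ?polyCN ?opprK //.
rewrite det_L4 !polyCB !polyCM ?polyCD ?polyCN ?polyC1.
ring.
Qed.
Section S.
Variable R : realType.

Lemma dsqrtV (u : R -> R) z u' n : 0 < u z -> is_derive z 1 u u' ->
  is_derive z 1 (fun s => ((Num.sqrt (u s))^+n)^-1)
   (- ((Num.sqrt (u z))^+n)^-2 * ((n%:R * Num.sqrt (u z)^+n.-1) * ((2 * Num.sqrt (u z))^-1 * u'))).
Proof.
move=> hu hd.
have hs := is_derive1_comp (is_derive1_sqrt hu) hd.
have hX := @is_deriveX _ _ _ n z 1 _ hs.
have hz : ((Num.sqrt \o u) ^+ n) z != 0.
  by rewrite exprfctE /= expf_neq0 // sqrtr_eq0 -ltNge.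
have hV := is_deriveV hz hX.
have -> : (fun s => ((Num.sqrt (u s))^+n)^-1) = (fun y => (((Num.sqrt \o u)^+n) y)^-1).
  by apply/funext => s; rewrite exprfctE.
apply: is_derive_eq hV _.
by rewrite exprfctE /=.
Qed.

Lemma dsq1 (x c : R) : is_derive x 1 (fun t : R => t ^+ 2 + c) (2 * x).
Proof. apply: is_derive_eq. by rewrite /GRing.scale /=; ring. Qed.


Lemma sqrt_neq0 (c : R) : 0 < c -> Num.sqrt c != 0.
Proof. by move=> hc; rewrite sqrtr_eq0 -ltNge. Qed.

Lemma dOx (mu x y : R) : 0 < x^+2 + y^+2 ->
  is_derive x 1 (fun t => Omega mu t y) (lam2 mu * x - x * ((Num.sqrt (x^+2+y^+2))^+3)^-1).
Proof.
move=> hxy.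
have hu : is_derive x 1 (fun t : R => t^+2 + y^+2) (2*x) by exact: dsq1.
have hV := @dsqrtV (fun t => t^+2 + y^+2) x (2*x) 1 hxy hu.
rewrite /Omega.
apply: is_derive_eq.
have hr := @sqrt_neq0 _ hxy.
rewrite /GRing.scale /= expr1; field.
by rewrite hr.
Qed.

Lemma dOy (mu x y : R) : 0 < x^+2 + y^+2 ->
  is_derive y 1 (fun t => Omega mu x t) (lam1 mu * y - y * ((Num.sqrt (x^+2+y^+2))^+3)^-1).
Proof.
move=> hxy.
have hu : is_derive y 1 (fun t : R => x^+2 + t^+2) (2*y).
  by apply: is_derive_eq; rewrite /GRing.scale /=; ring.
have hV := @dsqrtV (fun t => x^+2 + t^+2) y (2*y) 1 hxy hu.
rewrite /Omega.
apply: is_derive_eq.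
have hr := @sqrt_neq0 _ hxy.
rewrite /GRing.scale /= expr1; field.
by rewrite hr.
Qed.


Lemma near_neq0 (x : R) : x != 0 -> \forall s \near nbhs (x : R^o), s != 0.
Proof.
move=> hx; have [xl|xg|xe] := ltgtP x 0.
- by have := lt_nbhsl xl; apply: filterS => s /lt_eqF ->.
- by have := lt_nbhsr xg; apply: filterS => s /gt_eqF ->.
- by rewrite xe eqxx in hx.
Qed.

Lemma e02 : (0:R)^+2 = 0. Proof. by rewrite expr2 mulr0. Qed.

Lemma Oxx (mu x : R) : x != 0 ->
  Omega_xx mu x 0 = lam2 mu + 2 / (Num.sqrt (x^+2))^+3.
Proof.
move=> hx.
have hx2 : 0 < x^+2 + 0^+2 by rewrite e02 addr0 exprn_even_gt0.
rewrite /Omega_xx derive1E.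
rewrite (near_eq_derive _ (g := fun s => lam2 mu * s - s * ((Num.sqrt (s^+2 + 0^+2))^+3)^-1)).
  have hu : is_derive x 1 (fun t : R => t^+2 + 0^+2) (2*x) by exact: dsq1.
  have hV := @dsqrtV (fun t => t^+2 + 0^+2) x (2*x) 3 hx2 hu.
  have hd : is_derive x 1 (fun s => lam2 mu * s - s * ((Num.sqrt (s^+2 + 0^+2))^+3)^-1) 
    (lam2 mu + 2 / (Num.sqrt (x^+2))^+3).
    apply: is_derive_eq.
    have hr := @sqrt_neq0 _ hx2.
    have hr2 := sqr_sqrtr (ltW hx2).
    move: hr hr2; rewrite e02 addr0 => hr hr2.
    rewrite /GRing.scale /=.
    set r := Num.sqrt (x^+2) in hr hr2 *.
    transitivity (lam2 mu + 3 * x^+2 / r^+5 - r^-3); first by field; rewrite hr.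
    rewrite -hr2; field; by rewrite hr.
  by rewrite derive_val.
near=> s.
have hs : s != 0 by near: s; exact: near_neq0.
have hs2 : 0 < s^+2 + 0^+2 by rewrite e02 addr0 exprn_even_gt0.
have h := @dOx mu s 0 hs2; by rewrite derive1E derive_val.
Unshelve. all: by end_near.
Qed.

Lemma Oyy (mu x : R) : x != 0 ->
  Omega_yy mu x 0 = lam1 mu - 1 / (Num.sqrt (x^+2))^+3.
Proof.
move=> hx.
have hx2 : forall s, 0 < x^+2 + s^+2.
  move=> s; apply: (@lt_le_trans _ _ (x^+2)); first by rewrite exprn_even_gt0.
  by rewrite lerDl sqr_ge0.
rewrite /Omega_yy.
have -> : (fun s => derive1 (fun t => Omega mu x t) s) =
          (fun s => lam1 mu * s - s * ((Num.sqrt (x^+2 + s^+2))^+3)^-1).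
  by apply/funext => s; have h := @dOy mu x s (hx2 s); rewrite derive1E derive_val.
have hu : is_derive (0:R) (1:R) (fun t : R => x^+2 + t^+2) (2*0).
  by apply: is_derive_eq; rewrite /GRing.scale /=; ring.
have hV := @dsqrtV (fun t => x^+2 + t^+2) 0 (2*0) 3 (hx2 0) hu.
rewrite derive1E derive_val //.
have hr := @sqrt_neq0 _ (hx2 0).
move: hr; rewrite e02 addr0 => hr.
rewrite /GRing.scale /= ?e02 ?addr0. field.
by rewrite hr.
Qed.

Lemma Oxy (mu x : R) : x != 0 -> Omega_xy mu x 0 = 0.
Proof.
move=> hx.
have hx2 : forall s, 0 < x^+2 + s^+2.
  move=> s; apply: (@lt_le_trans _ _ (x^+2)); first by rewrite exprn_even_gt0.
  by rewrite lerDl sqr_ge0.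
rewrite /Omega_xy.
have -> : (fun s => derive1 (fun t => Omega mu t s) x) =
          (fun s => lam2 mu * x - x * ((Num.sqrt (x^+2 + s^+2))^+3)^-1).
  by apply/funext => s; have h := @dOx mu x s (hx2 s); rewrite derive1E derive_val.
have hu : is_derive (0:R) (1:R) (fun t : R => x^+2 + t^+2) (2*0).
  by apply: is_derive_eq; rewrite /GRing.scale /=; ring.
have hV := @dsqrtV (fun t => x^+2 + t^+2) 0 (2*0) 3 (hx2 0) hu.
rewrite derive1E derive_val //.
have hr := @sqrt_neq0 _ (hx2 0).
move: hr; rewrite e02 addr0 => hr.
rewrite /GRing.scale /= ?e02 ?addr0. field.
by rewrite hr.
Qed.


Lemma prod4 (a b : R[i]) :
  \prod_(z <- [:: a; -a; b; -b]) ('X - z%:P) = 'X^4 - (a * a + b * b)%:P * 'X^2 + (a * a * (b * b))%:P.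
Proof.
rewrite !big_cons big_nil !polyCN !polyCD !polyCM; ring.
Qed.

Lemma cplx_lin (a b c : R) :
  map_mx (fun z => Complex z 0) (mx4 [:: [:: 0; 0; 1; 0]; [:: 0; 0; 0; 1]; [:: a; b; 0; 2]; [:: b; c; -2; 0]])
  = L4 [:: [:: 0; 0; 1; 0]; [:: 0; 0; 0; 1]; [:: real_complex R a; real_complex R b; 0; 2];
        [:: real_complex R b; real_complex R c; -2; 0]].
Proof.
apply/matrixP => i j; rewrite !mxE.
case: i => [[|[|[|[|?]]]] ?] //; case: j => [[|[|[|[|?]]]] ?] //=;
  rewrite -[Complex _ 0]/(real_complex R _) ?rmorph0 ?rmorph1 ?rmorphN ?rmorph_nat //.
Qed.

Lemma cplx_fact (a b c : R) : a * c - b ^+ 2 < 0 ->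
  exists Lam omega : R, 0 < Lam /\ 0 < omega /\
      char_poly (map_mx (fun z => Complex z 0)
        (mx4 [:: [:: 0; 0; 1; 0]; [:: 0; 0; 0; 1]; [:: a; b; 0; 2]; [:: b; c; -2; 0]])) =
        \prod_(z <- [:: Complex Lam 0; Complex (- Lam) 0;
                        Complex 0 omega; Complex 0 (- omega)])
          ('X - z%:P).
Proof.
set A := 4 - a - c; set B := a * c - b ^+ 2.
move=> hB.
set D := Num.sqrt (A ^+ 2 - 4 * B).
have hD2 : D ^+ 2 = A ^+ 2 - 4 * B by rewrite sqr_sqrtr //; nra.
have hD0 : 0 <= D by exact: sqrtr_ge0.
have hAD : A < D by nra.
have hAD' : - A < D by nra.
set s1 := (- A + D) / 2.
set s2 := (A + D) / 2.
have hs1 : 0 < s1 by rewrite /s1; lra.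
have hs2 : 0 < s2 by rewrite /s2; lra.
exists (Num.sqrt s1), (Num.sqrt s2).
split; first by rewrite sqrtr_gt0.
split; first by rewrite sqrtr_gt0.
rewrite cplx_lin cp4.
have e1 : Complex (- Num.sqrt s1) 0 = - Complex (Num.sqrt s1) 0 :> R[i].
  by rewrite /GRing.opp /= oppr0.
have e2 : Complex 0 (- Num.sqrt s2) = - Complex 0 (Num.sqrt s2) :> R[i].
  by rewrite /GRing.opp /= oppr0.
rewrite e1 e2 prod4.
have q1 : Complex (Num.sqrt s1) 0 * Complex (Num.sqrt s1) 0 = Complex s1 0 :> R[i].
  by rewrite /GRing.mul /=; congr (Complex _ _); rewrite ?mulr0 ?mul0r ?subr0 ?addr0 -?expr2 ?sqr_sqrtr ?ltW.
have q2 : Complex 0 (Num.sqrt s2) * Complex 0 (Num.sqrt s2) = Complex (- s2) 0 :> R[i].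
  by rewrite /GRing.mul /=; congr (Complex _ _); rewrite ?mulr0 ?mul0r ?sub0r ?addr0 -?expr2 ?sqr_sqrtr ?ltW.
rewrite q1 q2.
have hA : A = s2 - s1 by rewrite /s1 /s2; field.
have hB' : B = - (s1 * s2).
  rewrite /s1 /s2.
  have -> : (- A + D) / 2 * ((A + D) / 2) = (D ^+ 2 - A ^+ 2) / 4 by field.
  by rewrite hD2; field.
have -> : 4 - real_complex R a - real_complex R c = real_complex R A.
  by rewrite /A !rmorphB rmorph_nat.
have -> : real_complex R a * real_complex R c - real_complex R b ^+ 2 = real_complex R B.
  by rewrite /B rmorphB rmorphM rmorphXn.
rewrite hA hB'.
have -> : real_complex R (s2 - s1) = - (Complex s1 0 + Complex (-s2) 0) :> R[i].
  by rewrite -[Complex s1 0]/(real_complex R s1) -[Complex (-s2) 0]/(real_complex R (-s2)) -rmorphD -rmorphN opprD opprK addrC.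
have -> : real_complex R (- (s1 * s2)) = Complex s1 0 * Complex (-s2) 0 :> R[i].
  by rewrite -[Complex s1 0]/(real_complex R s1) -[Complex (-s2) 0]/(real_complex R (-s2)) -rmorphM mulrN.
rewrite polyCN; ring.
Qed.


Lemma main_at (mu x : R) : x != 0 -> (Num.sqrt (x^+2))^+3 * lam2 mu = 1 -> 0 < dd mu ->
  let p := (x, 0) in
    char_poly (linA mu p) = 'X^4 + polyC (hillA mu p) * 'X^2 + polyC (hillB mu p) /\
    hillB mu p < 0 /\
    exists Lam omega : R, 0 < Lam /\ 0 < omega /\
      char_poly (cplx_mx (linA mu p)) =
        \prod_(z <- [:: complex.Complex Lam 0; complex.Complex (- Lam) 0;
                        complex.Complex 0 omega; complex.Complex 0 (- omega)])
          ('X - z%:P).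
Proof.
move=> hx hr3 hd p.
have Hxx := @Oxx mu x hx; have Hyy := @Oyy mu x hx; have Hxy := @Oxy mu x hx.
set r3 := (Num.sqrt (x^+2))^+3 in hr3 Hxx Hyy.
have r30 : r3 != 0 by apply/eqP => h; move: hr3; rewrite h mul0r => /eqP; rewrite eq_sym oner_eq0.
have hl2 : lam2 mu = r3^-1 by apply: (mulfI r30); rewrite mulfV.
have hl2p : 0 < lam2 mu.
  rewrite /lam2; have := ltW hd; lra.
have hB : hillB mu p < 0.
  rewrite /hillB /= Hxx Hyy Hxy -hl2.
  have -> : forall l d : R, (l + 2 * l) * (3 / 2 * (1 - d) - 1 * l) - 0 ^+ 2 = 3 * l * (3/2 * (1 - d) - l).
    by move=> l d; ring.
  have -> : 3/2*(1 - dd mu) - lam2 mu = - (3 * dd mu) by rewrite /lam2; field.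
  by rewrite mulrN oppr_lt0 mulr_gt0 ?mulr_gt0 ?ltr0n //; lra.
split; first by rewrite /linA /hillA /hillB /=; exact: cp4.
split; first exact: hB.
move: hB; rewrite /hillB /= => hB.
exact: cplx_fact.
Qed.

Lemma a3 (l : R) : 0 < l -> (l `^ (- 3^-1)) ^+ 3 = l^-1.
Proof.
move=> hl.
rewrite -powR_mulrn ?powR_ge0 // -powRrM.
have -> : - 3^-1 * 3%:R = -1 :> R by field.
by rewrite powR_inv1 // ltW.
Qed.

End S.

Theorem proposition1 (R : realType) (mu : R) :
  0 <= mu <= 2^-1 ->
  forall p : R * R, p = L1 mu \/ p = L2 mu ->
    char_poly (linA mu p) = 'X^4 + polyC (hillA mu p) * 'X^2 + polyC (hillB mu p) /\
    hillB mu p < 0 /\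
    exists Lam omega : R, 0 < Lam /\ 0 < omega /\
      char_poly (cplx_mx (linA mu p)) =
        \prod_(z <- [:: complex.Complex Lam 0; complex.Complex (- Lam) 0;
                        complex.Complex 0 omega; complex.Complex 0 (- omega)])
          ('X - z%:P).
Proof.
move=> _ p hp.
have hd : 0 < dd mu.
  rewrite /dd sqrtr_gt0; have h := sqr_ge0 (2 * mu - 1); nra.
have hl2p : 0 < lam2 mu.
  rewrite /lam2; have := ltW hd; lra.
set a := lam2 mu `^ (- 3^-1).
have ha : 0 < a by rewrite powR_gt0.
have ha3 : a ^+ 3 * lam2 mu = 1 by rewrite /a a3 // mulVf // gt_eqF.
case: hp => ->.
- apply: main_at => //; first by rewrite gt_eqF.
  by rewrite sqrtr_sqr ger0_norm // ltW.
- apply: main_at => //; first by rewrite oppr_eq0 gt_eqF.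
  by rewrite sqrtr_sqr normrN ger0_norm // ltW.
Qed.
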